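(* Let $a,b\in\mathbb{O}$ have norm one and let $\Phi:\mathbb{O}\to\mathbb{O}$ be a linear map. The following are equivalent: (1) $\Phi$ is an automorphism of $\mathbb{O}$ with $\Phi(a)=b$; (2) $\Phi$ is an algebra isomorphism from ${}^*\mathbb{O}_l(a,1)$ onto ${}^*\mathbb{O}_l(b,1)$ with $\Phi(1)=1$.
   Context: $\mathbb{O}$ is the real octonion algebra with conjugation $x\mapsto\bar x$. For norm-one $a\in\mathbb{O}$, ${}^*\mathbb{O}_l(a,1)$ is the normed space of $\mathbb{O}$ with product $x\odot y=(\bar x a)y$; it is an absolute-valued algebra with left unit $a$. *)

(* Defs.v *)
(* Real octonions O = R^8 with the standard Fano-plane
   multiplication table (e_i e_{i+1} = e_{i+3}, indices 1..7 mod 7). *)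
From HB Require Import structures.
From mathcomp Require Import all_boot all_order all_algebra.
From mathcomp Require Import reals.
Set Implicit Arguments. Unset Strict Implicit. Unset Printing Implicit Defensive.
Import Order.TTheory GRing.Theory Num.Theory.
Local Open Scope ring_scope.

Notation oct R := 'rV[R]_8.

Definition obasis (R : realType) (k : 'I_8) : oct R := delta_mx 0 k.

(* For 1 <= i, j <= 7, i <> j, let d = (j - i) mod 7; then
   d=1: e_{i+3}, d=2: e_{i+6}, d=4: e_{i+5},
   d=6: -e_{i+2}, d=5: -e_{i+4}, d=3: -e_{i+1}  (indices in 1..7 mod 7). *)
Definition tdiff (i j : nat) : nat := (j + 7 - i) %% 7.
Definition toff (d : nat) : nat :=
  match d with 1 => 3 | 2 => 6 | 4 => 5 | 6 => 2 | 5 => 4 | 3 => 1 | _ => 0 end.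
Definition tidx_nat (i j : nat) : nat :=
  if i == 0 then j else if j == 0 then i else if i == j then 0
  else ((i - 1 + toff (tdiff i j)) %% 7).+1.
Definition tsign (R : realType) (i j : nat) : R :=
  if i == 0 then 1 else if j == 0 then 1 else if i == j then -1
  else if tdiff i j \in [:: 1; 2; 4]%N then 1 else -1.
Definition tidx (i j : 'I_8) : 'I_8 := inord (tidx_nat i j).

Definition omul (R : realType) (x y : oct R) : oct R :=
  \sum_(i < 8) \sum_(j < 8)
     (x 0 i * y 0 j * tsign R i j) *: obasis R (tidx i j).

Definition oone (R : realType) : oct R := obasis R 0.

Definition oconj (R : realType) (x : oct R) : oct R :=
  \row_i (if i == 0 :> 'I_8 then x 0 i else - x 0 i).

Definition onorm (R : realType) (x : oct R) : R :=
  Num.sqrt (\sum_(i < 8) x 0 i ^+ 2).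

(* The product of *O_l(a,1):  x (.) y = (xbar a) y *)
Definition omul_la (R : realType) (a : oct R) (x y : oct R) : oct R :=
  omul (omul (oconj x) a) y.

Definition oct_automorphism (R : realType) (Phi : {linear oct R -> oct R}) : Prop :=
  bijective Phi /\ forall x y, Phi (omul x y) = omul (Phi x) (Phi y).

Definition starOl_isomorphism (R : realType) (a b : oct R)
    (Phi : {linear oct R -> oct R}) : Prop :=
  bijective Phi /\ forall x y, Phi (omul_la a x y) = omul_la b (Phi x) (Phi y).

(* Main.v *)
Require Import Defs.
From HB Require Import structures.
From mathcomp Require Import all_boot all_order all_algebra.
From mathcomp Require Import reals.
From mathcomp Require Import ring lra.
Import Order.TTheory GRing.Theory Num.Theory.
Local Open Scope ring_scope.
Set Implicit Arguments. Unset Strict Implicit. Unset Printing Implicit Defensive.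

Section S.
Variable R : realType.
Implicit Types x y z : oct R.

Definition omulP x y (k : nat) : R :=
  match k with
  | 0 => x 0 (inord 0) * y 0 (inord 0) - x 0 (inord 1) * y 0 (inord 1) - x 0 (inord 2) * y 0 (inord 2) - x 0 (inord 3) * y 0 (inord 3) - x 0 (inord 4) * y 0 (inord 4) - x 0 (inord 5) * y 0 (inord 5) - x 0 (inord 6) * y 0 (inord 6) - x 0 (inord 7) * y 0 (inord 7)
  | 1 => x 0 (inord 0) * y 0 (inord 1) + x 0 (inord 1) * y 0 (inord 0) + x 0 (inord 2) * y 0 (inord 4) + x 0 (inord 3) * y 0 (inord 7) - x 0 (inord 4) * y 0 (inord 2) + x 0 (inord 5) * y 0 (inord 6) - x 0 (inord 6) * y 0 (inord 5) - x 0 (inord 7) * y 0 (inord 3)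
  | 2 => x 0 (inord 0) * y 0 (inord 2) - x 0 (inord 1) * y 0 (inord 4) + x 0 (inord 2) * y 0 (inord 0) + x 0 (inord 3) * y 0 (inord 5) + x 0 (inord 4) * y 0 (inord 1) - x 0 (inord 5) * y 0 (inord 3) + x 0 (inord 6) * y 0 (inord 7) - x 0 (inord 7) * y 0 (inord 6)
  | 3 => x 0 (inord 0) * y 0 (inord 3) - x 0 (inord 1) * y 0 (inord 7) - x 0 (inord 2) * y 0 (inord 5) + x 0 (inord 3) * y 0 (inord 0) + x 0 (inord 4) * y 0 (inord 6) + x 0 (inord 5) * y 0 (inord 2) - x 0 (inord 6) * y 0 (inord 4) + x 0 (inord 7) * y 0 (inord 1)
  | 4 => x 0 (inord 0) * y 0 (inord 4) + x 0 (inord 1) * y 0 (inord 2) - x 0 (inord 2) * y 0 (inord 1) - x 0 (inord 3) * y 0 (inord 6) + x 0 (inord 4) * y 0 (inord 0) + x 0 (inord 5) * y 0 (inord 7) + x 0 (inord 6) * y 0 (inord 3) - x 0 (inord 7) * y 0 (inord 5)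
  | 5 => x 0 (inord 0) * y 0 (inord 5) - x 0 (inord 1) * y 0 (inord 6) + x 0 (inord 2) * y 0 (inord 3) - x 0 (inord 3) * y 0 (inord 2) - x 0 (inord 4) * y 0 (inord 7) + x 0 (inord 5) * y 0 (inord 0) + x 0 (inord 6) * y 0 (inord 1) + x 0 (inord 7) * y 0 (inord 4)
  | 6 => x 0 (inord 0) * y 0 (inord 6) + x 0 (inord 1) * y 0 (inord 5) - x 0 (inord 2) * y 0 (inord 7) + x 0 (inord 3) * y 0 (inord 4) - x 0 (inord 4) * y 0 (inord 3) - x 0 (inord 5) * y 0 (inord 1) + x 0 (inord 6) * y 0 (inord 0) + x 0 (inord 7) * y 0 (inord 2)
  | _ => x 0 (inord 0) * y 0 (inord 7) + x 0 (inord 1) * y 0 (inord 3) + x 0 (inord 2) * y 0 (inord 6) - x 0 (inord 3) * y 0 (inord 1) + x 0 (inord 4) * y 0 (inord 5) - x 0 (inord 5) * y 0 (inord 4) - x 0 (inord 6) * y 0 (inord 2) + x 0 (inord 7) * y 0 (inord 0)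
  end.

Lemma inord_eq8 (m n : nat) : (m < 8)%N -> (n < 8)%N ->
  ((inord m : 'I_8) == inord n) = (m == n).
Proof.
move=> hm hn; apply/eqP/eqP => [h|->//]; by rewrite -(inordK hm) -(inordK hn) h.
Qed.

Lemma tidx_lt i j : (i < 8)%N -> (j < 8)%N -> (tidx_nat i j < 8)%N.
Proof.
move=> hi hj; rewrite /tidx_nat.
case: eqP => // _; case: eqP => // _; case: eqP => // _.
by rewrite ltnS ltn_mod.
Qed.

Lemma sum8 (F : 'I_8 -> R) : \sum_(i < 8) F i = \sum_(0 <= i < 8) F (inord i).
Proof. by rewrite big_mkord; apply: eq_bigr => i _; rewrite inord_val. Qed.

Lemma omulE x y (k : nat) : (k < 8)%N -> omul x y 0 (inord k) = omulP x y k.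
Proof.
move=> hk; rewrite /omul summxE sum8.
under eq_bigr => i _ do rewrite summxE sum8.
have E : forall i j, (i < 8)%N -> (j < 8)%N ->
  ((x 0 (inord i) * y 0 (inord j) * tsign R (inord i : 'I_8) (inord j : 'I_8)) *:
     obasis R (tidx (inord i) (inord j))) 0 (inord k) =
  x 0 (inord i) * y 0 (inord j) * (if tidx_nat i j == k then tsign R i j else 0).
  move=> i j hi hj; rewrite !mxE eqxx /= eq_sym /tidx !inordK // inord_eq8 //; last exact: tidx_lt.
  by case: eqP; rewrite ?mulr1 ?mulr0.
rewrite (eq_big_nat _ _ (F2 := fun i => \sum_(0 <= j < 8) x 0 (inord i) * y 0 (inord j) * (if tidx_nat i j == k then tsign R i j else 0))); last first.
  move=> i /andP[_ hi]; apply: eq_big_nat => j /andP[_ hj]; exact: E.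
clear E; move: k hk; do 8 (case; first by move=> _; rewrite !big_nat_recl // !big_geq //= /tsign /=; ring).
done.
Qed.

Lemma octP x y : (forall k, (k < 8)%N -> x 0 (inord k) = y 0 (inord k)) -> x = y.
Proof. by move=> h; apply/rowP => i; rewrite -(inord_val i); apply: h. Qed.

Lemma oconjE x k : (k < 8)%N ->
  oconj x 0 (inord k) = if k == 0%N then x 0 (inord k) else - x 0 (inord k).
Proof. by move=> hk; rewrite mxE -val_eqE /= inordK. Qed.

Lemma ooneE k : (k < 8)%N -> oone R 0 (inord k) = if k == 0%N then 1 else 0.
Proof. by move=> hk; rewrite /oone /obasis mxE eqxx /= -val_eqE /= inordK //; case: (k == 0%N). Qed.

Lemma scaleE (c : R) x k : (c *: x) 0 k = c * x 0 k.
Proof. by rewrite mxE. Qed.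

Lemma subE x y k : (x - y) 0 k = x 0 k - y 0 k.
Proof. by rewrite !mxE. Qed.

Definition nrm x := \sum_(i < 8) x 0 i ^+ 2.

Lemma nrmE x : nrm x = \sum_(0 <= i < 8) x 0 (inord i) ^+ 2.
Proof. by rewrite /nrm sum8. Qed.

Lemma nrm_ge0 x : 0 <= nrm x.
Proof. by apply: sumr_ge0 => i _; apply: sqr_ge0. Qed.

Ltac octsolve := apply: octP;
  do 8 (case; first by move=> _; rewrite ?nrmE ?big_nat_recl // ?big_geq //
         ?scaleE ?subE ?omulE // /omulP ?omulE // /omulP ?scaleE ?subE ?oconjE ?ooneE //=; ring);
  done.

Lemma omul1x x : omul (oone R) x = x.
Proof. octsolve. Qed.
Lemma omulx1 x : omul x (oone R) = x.
Proof. octsolve. Qed.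
Lemma oconj1 : oconj (oone R) = oone R.
Proof. octsolve. Qed.
Lemma oconjK x : oconj (oconj x) = x.
Proof. octsolve. Qed.
Lemma oconj_dec x : oconj x = (2 * x 0 (inord 0)) *: oone R - x.
Proof. octsolve. Qed.
Lemma omul_sq y : omul y y = (2 * y 0 (inord 0)) *: y - nrm y *: oone R.
Proof. octsolve. Qed.
Lemma omul_inv z a : omul (omul z (oconj a)) a = nrm a *: z.
Proof. octsolve. Qed.
End S.

Lemma nrm1 (R : realType) (a : oct R) : onorm a = 1 -> nrm a = 1.
Proof.
move=> h; rewrite -[nrm a]sqr_sqrtr ?nrm_ge0 //.
by move: h; rewrite /onorm -/(nrm a) => ->; rewrite expr1n.
Qed.

Lemma re_pres (R : realType) (Phi : {linear oct R -> oct R}) :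
  (forall x y, Phi (omul x y) = omul (Phi x) (Phi y)) -> Phi (oone R) = oone R ->
  forall x, Phi x 0 (inord 0) = x 0 (inord 0).
Proof.
move=> hm h1 x.
set v := x - x 0 (inord 0) *: oone R.
have v0 : v 0 (inord 0) = 0 by rewrite subE scaleE ooneE //=; ring.
have hx : x = v + x 0 (inord 0) *: oone R by rewrite /v subrK.
have hvv : omul v v = (- nrm v) *: oone R.
  by rewrite omul_sq v0 mulr0 scale0r sub0r scaleNr.
set y := Phi v.
have hyy : omul y y = (- nrm v) *: oone R by rewrite /y -hm hvv linearZ h1.
have y0 : y 0 (inord 0) = 0.
  have := hyy; rewrite omul_sq => e.
  have ek : forall k, (k < 8)%N ->
    ((2 * y 0 (inord 0)) *: y - nrm y *: oone R) 0 (inord k) =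
    ((- nrm v) *: oone R) 0 (inord k) by move=> k _; rewrite e.
  move: (ek 0%N isT) (ek 1%N isT) (ek 2%N isT) (ek 3%N isT) (ek 4%N isT)
    (ek 5%N isT) (ek 6%N isT) (ek 7%N isT).
  rewrite !subE !scaleE !ooneE //= nrmE !big_nat_recl // big_geq //=.
  move=> e0 e1 e2 e3 e4 e5 e6 e7.
  have hn := nrm_ge0 v.
  set y0 := y 0 (inord 0) in e0 e1 e2 e3 e4 e5 e6 e7 *.
  have : y0 ^+ 4 <= 0 by nra.
  move=> h4; have : y0 ^+ 4 == 0 by rewrite eq_le h4 exprn_even_ge0.
  by rewrite expf_eq0 => /andP[_ /eqP].
have addE (u w : oct R) k : (u + w) 0 k = u 0 k + w 0 k by rewrite mxE.
rewrite [in LHS]hx linearD linearZ h1 /= addE scaleE.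
by change (Phi v) with y; rewrite y0 ooneE //= mulr1 add0r.
Qed.

Theorem proposition4 (R : realType) (a b : oct R)
  (ha : onorm a = 1) (hb : onorm b = 1) (Phi : {linear oct R -> oct R}) :
  (oct_automorphism Phi /\ Phi a = b) <->
  (starOl_isomorphism a b Phi /\ Phi (oone R) = oone R).
Proof.
split.
- move=> [[bij hm] hab].
  have h1 : Phi (oone R) = oone R.
    case: bij => g c1 c2.
    have e := c2 (oone R).
    have := hm (oone R) (g (oone R)); rewrite omul1x e omulx1 => <-.
    by [].
  have re := re_pres hm h1.
  have hc : forall x, Phi (oconj x) = oconj (Phi x).
    by move=> x; rewrite !oconj_dec linearB linearZ h1 /= re.
  split=> //; split=> // x y.
  by rewrite /omul_la !hm hc hab.
- move=> [[bij h] h1].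
  have hA : forall y, Phi (omul a y) = omul b (Phi y).
    by move=> y; have := h (oone R) y; rewrite /omul_la oconj1 omul1x h1 oconj1 omul1x.
  have hab : Phi a = b by have := hA (oone R); rewrite omulx1 h1 omulx1.
  have hW : forall x, Phi (omul (oconj x) a) = omul (oconj (Phi x)) b.
    by move=> x; have := h x (oone R); rewrite /omul_la !omulx1 h1 omulx1.
  split=> //; split=> // z y.
  have := h (oconj (omul z (oconj a))) y.
  rewrite /omul_la -hW oconjK omul_inv nrm1 // scale1r => ->.
  done.
Qed.
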